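(* Let $f_1,\dots,f_k:\mathbb{R}^n\to\mathbb{R}$ be continuously differentiable, and let $x\in\mathbb{R}^n$. Suppose vectors $\nabla\widetilde{f}_1(x),\dots,\nabla\widetilde{f}_k(x)\in\mathbb{R}^n$ satisfy $\|\nabla\widetilde{f}_i(x)-\nabla f_i(x)\|_2\le\epsilon_i$ for given $\epsilon_i\ge0$, and $\nabla\widetilde{f}_i(x)\neq0$ for $i=1,\dots,k$. Let $\widehat{\alpha}_1,\dots,\widehat{\alpha}_k\ge0$ with $\sum_{i=1}^k\widehat{\alpha}_i=1$, put $q_u(x)=-\sum_{j=1}^k\widehat{\alpha}_j\nabla\widetilde{f}_j(x)$, and assume $q_u(x)\neq0$. Then for each $i\in\{1,\dots,k\}$ the condition \[ \frac{q_u(x)\cdot\bigl(-\nabla\widetilde{f}_i(x)\bigr)}{\|q_u(x)\|_2\,\|\nabla\widetilde{f}_i(x)\|_2}\ \ge\ \frac{\epsilon_i}{\|\nabla\widetilde{f}_i(x)\|_2} \] is equivalent to \[ \widehat{\alpha}_i\ \ge\ \frac{1}{\|\nabla\widetilde{f}_i(x)\|_2^2}\Bigl(\|q_u(x)\|_2\,\epsilon_i-\sum_{j=1,\,j\neq i}^k\widehat{\alpha}_j\bigl(\nabla\widetilde{f}_j(x)\cdot\nabla\widetilde{f}_i(x)\bigr)\Bigr). \] In particular, if the latter inequality holds for all $i=1,\dots,k$, then $q_u(x)$ is a descent direction for all objectives, i.e. $-\nabla f_i(x)\cdot q_u(x)\ge0$ for $i=1,\dots,k$.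
   Context: Here $\nabla\widetilde{f}_i(x)$ are inexact approximations of the exact gradients $\nabla f_i(x)$ of the objectives of the multiobjective problem $\min_{x\in\mathbb{R}^n}(f_1(x),\dots,f_k(x))$. In the paper the first condition is phrased as $\gamma_i\ge\varphi_i$, where $\gamma_i=\frac{\pi}{2}-\arccos\bigl(\frac{q_u(x)\cdot(-\nabla\widetilde{f}_i(x))}{\|q_u(x)\|_2\|\nabla\widetilde{f}_i(x)\|_2}\bigr)$ is the angle between $q_u(x)$ and the hyperplane orthogonal to the $i$-th gradient, and $\varphi_i=\arcsin\bigl(\epsilon_i/\|\nabla\widetilde{f}_i(x)\|_2\bigr)$ is the worst-case angular deviation between exact and inexact gradient (when $\epsilon_i\le\|\nabla\widetilde f_i(x)\|_2$); $\gamma_i\ge\varphi_i$ is the same as the displayed cosine inequality. *)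

(* Defs.v *)
From HB Require Import structures.
From mathcomp Require Import all_boot all_order all_algebra.
From mathcomp Require Import all_classical all_reals all_analysis.
Set Implicit Arguments. Unset Strict Implicit. Unset Printing Implicit Defensive.
Import Order.TTheory GRing.Theory Num.Theory.
Import numFieldNormedType.Exports.
Local Open Scope ring_scope.

Definition dot (R : realType) (n : nat) (u v : 'rV[R]_n) : R :=
  \sum_(j < n) u ord0 j * v ord0 j.

Definition norm2 (R : realType) (n : nat) (v : 'rV[R]_n) : R :=
  Num.sqrt (dot v v).

Definition is_gradient (R : realType) (n : nat) (f : 'rV[R]_n -> R)
    (x g : 'rV[R]_n) : Prop :=
  differentiable f x /\ forall v : 'rV[R]_n, 'd f x v = dot g v.

(* Main.v *)
Require Import Defs.
From HB Require Import structures.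
From mathcomp Require Import all_boot all_order all_algebra.
From mathcomp Require Import all_classical all_reals all_analysis.
From mathcomp Require Import ring lra.
Import Order.TTheory GRing.Theory Num.Theory.
Import numFieldNormedType.Exports.
Local Open Scope ring_scope.

Section D.
Variables (R : realType) (n : nat).
Implicit Types u v w : 'rV[R]_n.

Lemma dotC u v : dot u v = dot v u.
Proof. by rewrite /dot; apply: eq_bigr => j _; rewrite mulrC. Qed.

Lemma dotNl u v : dot (- u) v = - dot u v.
Proof. rewrite /dot -sumrN; apply: eq_bigr => j _; by rewrite mxE mulNr. Qed.

Lemma dotBl u v w : dot (u - v) w = dot u w - dot v w.
Proof. rewrite /dot -sumrB; apply: eq_bigr => j _; by rewrite !mxE mulrBl. Qed.

Lemma dot_suml (k : nat) (a : 'I_k -> R) (F : 'I_k -> 'rV[R]_n) w :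
  dot (\sum_(i < k) a i *: F i) w = \sum_(i < k) a i * dot (F i) w.
Proof.
rewrite /dot; under eq_bigr => j _ do rewrite summxE mulr_suml.
rewrite exchange_big /=; apply: eq_bigr => i _; rewrite mulr_sumr.
by apply: eq_bigr => j _; rewrite mxE mulrA.
Qed.

Lemma dot_ge0 u : 0 <= dot u u.
Proof. by apply: sumr_ge0 => j _; rewrite -expr2 sqr_ge0. Qed.

Lemma dot_eq0 u : dot u u = 0 -> u = 0.
Proof.
move=> h; apply/matrixP => i j; rewrite mxE (ord1 i).
have hj : u ord0 j * u ord0 j = 0.
  apply: (@psumr_eq0P R _ predT (fun j => u ord0 j * u ord0 j)) => //.
  by move=> l _; rewrite -expr2 sqr_ge0.
by move: hj; rewrite -expr2 => /eqP; rewrite sqrf_eq0 => /eqP.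
Qed.

Lemma dot_quad u v t : 0 <= dot u u - 2 * t * dot u v + t ^+ 2 * dot v v.
Proof.
have := dot_ge0 (u - t *: v).
suff -> : dot (u - t *: v) (u - t *: v) = dot u u - 2 * t * dot u v + t ^+ 2 * dot v v by [].
rewrite /dot mulr_sumr mulr_sumr -sumrB -big_split /=; apply: eq_bigr => j _.
rewrite !mxE; ring.
Qed.

Lemma cs u v : dot u v <= norm2 u * norm2 v.
Proof.
rewrite /norm2 -sqrtrM ?dot_ge0 //.
have [B0|Bp] := lerP (dot u v) 0.
  by apply: le_trans B0 _; rewrite sqrtr_ge0.
rewrite -(ger0_norm (ltW Bp)) -sqrtr_sqr ler_sqrt ?mulr_ge0 ?dot_ge0 //.
try rewrite ger0_norm ?(ltW Bp) //.
have A0 := dot_ge0 v; have C0 := dot_ge0 u.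
have [Az|Ap] := eqVneq (dot v v) 0.
  have := dot_quad u v ((dot u u + 1) / (2 * dot u v)).
  have -> : 2 * ((dot u u + 1) / (2 * dot u v)) * dot u v = dot u u + 1.
    by field; rewrite gt_eqF.
  rewrite Az mulr0 addr0; lra.
have Ap' : 0 < dot v v by rewrite lt_def Ap A0.
have := dot_quad u v (dot u v / dot v v).
move=> h; rewrite -(ler_pM2r Ap') in h.
suff : dot u v ^+ 2 <= dot u u * dot v v by rewrite mulrC.
have e : (dot u u - 2 * (dot u v / dot v v) * dot u v + (dot u v / dot v v) ^+ 2 * dot v v) * dot v v = dot u u * dot v v - dot u v ^+ 2.
  by field; rewrite Ap.
rewrite mul0r e in h; lra.
Qed.

Lemma cs' u v : - (norm2 u * norm2 v) <= dot u v.
Proof.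
have := cs (- u) v; rewrite dotNl.
have -> : norm2 (- u) = norm2 u.
  by rewrite /norm2 dotNl dotC dotNl opprK.
lra.
Qed.

Lemma norm2_gt0 u : u != 0 -> 0 < norm2 u.
Proof.
move=> h; rewrite /norm2 sqrtr_gt0 lt_def dot_ge0 andbT.
by apply/eqP => /dot_eq0; apply/eqP.
Qed.

Lemma norm2_sq u : norm2 u ^+ 2 = dot u u.
Proof. by rewrite /norm2 sqr_sqrtr // dot_ge0. Qed.
End D.
Arguments dotC {R n}. Arguments dotNl {R n}. Arguments dotBl {R n}. Arguments dot_suml {R n k}.
Arguments cs' {R n}. Arguments norm2_gt0 {R n u}. Arguments norm2_sq {R n}.

Theorem lemma2 (R : realType) (n k : nat)
    (f : 'I_k -> 'rV[R]_n -> R) (G : 'I_k -> 'rV[R]_n -> 'rV[R]_n)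
    (x : 'rV[R]_n) (gt : 'I_k -> 'rV[R]_n) (eps alpha : 'I_k -> R) :
  (* f_i continuously differentiable with gradient G i *)
  (forall i y, is_gradient (f i) y (G i y)) ->
  (forall i, continuous (G i)) ->
  (* inexact gradients *)
  (forall i, 0 <= eps i) ->
  (forall i, norm2 (gt i - G i x) <= eps i) ->
  (forall i, gt i != 0) ->
  (forall i, 0 <= alpha i) ->
  \sum_(i < k) alpha i = 1 ->
  let q := - \sum_(j < k) alpha j *: gt j in
  q != 0 ->
  (forall i,
     dot q (- gt i) / (norm2 q * norm2 (gt i)) >= eps i / norm2 (gt i)
     <->
     alpha i >= (norm2 (gt i) ^+ 2)^-1 *
                (norm2 q * eps i
                 - \sum_(j < k | j != i) alpha j * dot (gt j) (gt i)))
  /\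
  ((forall i, alpha i >= (norm2 (gt i) ^+ 2)^-1 *
                (norm2 q * eps i
                 - \sum_(j < k | j != i) alpha j * dot (gt j) (gt i))) ->
   forall i, 0 <= - dot (G i x) q).
Proof.
move=> Hgrad Hcont He Hd Hgt Ha Hsum q Hq.
have Qp := norm2_gt0 Hq.
have key : forall i, dot q (- gt i) = alpha i * norm2 (gt i) ^+ 2
    + \sum_(j < k | j != i) alpha j * dot (gt j) (gt i).
  move=> i; rewrite dotC dotNl dotC /q dotNl opprK dot_suml (bigD1 i) //=.
  by rewrite norm2_sq.
have P1 : forall i,
     dot q (- gt i) / (norm2 q * norm2 (gt i)) >= eps i / norm2 (gt i)
     <->
     alpha i >= (norm2 (gt i) ^+ 2)^-1 *
                (norm2 q * eps i
                 - \sum_(j < k | j != i) alpha j * dot (gt j) (gt i)).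
  move=> i; have Np := norm2_gt0 (Hgt i).
  have QN : 0 < (norm2 q * norm2 (gt i))^-1 by rewrite invr_gt0 mulr_gt0.
  have -> : eps i / norm2 (gt i) = (norm2 q * eps i) * (norm2 q * norm2 (gt i))^-1.
    by field; rewrite !gt_eqF.
  rewrite ler_pM2r // ler_pdivrMl ?exprn_gt0 // key.
  split => h; lra.
split => // H i.
have Np := norm2_gt0 (Hgt i).
move/P1: (H i).
have QN : 0 < (norm2 q * norm2 (gt i))^-1 by rewrite invr_gt0 mulr_gt0.
have -> : eps i / norm2 (gt i) = (norm2 q * eps i) * (norm2 q * norm2 (gt i))^-1.
  by field; rewrite !gt_eqF.
rewrite ler_pM2r // => h1.
have h2 := cs' (gt i - G i x) q.
rewrite dotBl in h2.
rewrite dotC dotNl dotC in h1.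
have h3 : norm2 (gt i - G i x) * norm2 q <= eps i * norm2 q.
  by rewrite ler_pM2r // Hd.
have h4 := He i.
rewrite dotC; rewrite [dot q (gt i)]dotC in h1; rewrite [eps i * _]mulrC in h3.
move: h1 h2 h3; set a := dot _ _; set b := dot _ _; set c := norm2 q * eps i; set d := _ * norm2 q; move=> h1 h2 h3; rewrite [dot q (G i x)]dotC -/b; lra.
Qed.
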